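(* Let $H$ be a separable complex Hilbert space, $(\Omega,\mu)$ a measure space with positive measure, let $K\in B(H)$ have closed range, let $F:\Omega\to H$ be a Parseval continuous $K$-frame of $H$, and let $\tilde F(\omega)=K^{\dagger}F(\omega)$ be its canonical dual continuous $K$-Bessel sequence. Then: (1) $\tilde F$ is a Parseval continuous frame for the Hilbert space $(\mathcal{N}(K))^{\perp}$, i.e. $\int_\Omega|\langle f,\tilde F(\omega)\rangle|^2\,d\mu(\omega)=\|f\|^2$ for all $f\in(\mathcal{N}(K))^{\perp}$; (2) $\tilde F$ is a Parseval continuous $K^{\dagger}K$-frame of $H$, i.e. $\int_\Omega|\langle f,\tilde F(\omega)\rangle|^2\,d\mu(\omega)=\|(K^{\dagger}K)^{\ast}f\|^2$ for all $f\in H$; and $K\tilde F$ (i.e. $\omega\mapsto KK^{\dagger}F(\omega)$) is a Parseval continuous $K$-frame of $H$.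
   Context: $\mathcal{N}(K)$ is the null space of $K$. A map $F:\Omega\to H$ is weakly measurable if $\omega\mapsto\langle f,F(\omega)\rangle$ is measurable for every $f\in H$. For $L\in B(H)$, a Parseval continuous $L$-frame is a weakly measurable $F$ with $\int_\Omega|\langle f,F(\omega)\rangle|^2\,d\mu(\omega)=\|L^{\ast}f\|^2$ for all $f\in H$. $K^{\dagger}$ denotes the Moore–Penrose pseudo-inverse of the closed-range operator $K$. The canonical dual continuous $K$-Bessel sequence of a Parseval continuous $K$-frame $F$ is $K^{\dagger}F$; it satisfies $Kf=\int_\Omega\langle f,K^\dagger F(\omega)\rangle F(\omega)\,d\mu(\omega)$ for all $f\in H$. *)

(* Defs.v *)
From HB Require Import structures.
From mathcomp Require Import all_boot all_order all_algebra.
From mathcomp Require Import all_classical all_reals all_analysis.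
From mathcomp Require Import complex.
Set Implicit Arguments. Unset Strict Implicit. Unset Printing Implicit Defensive.
Import Order.TTheory GRing.Theory Num.Theory.
Import numFieldNormedType.Exports.
Local Open Scope classical_set_scope.
Local Open Scope ring_scope.

Section Hilbert.
Variables (R : realType).
Local Notation C := (R[i]).
Variable (H : completeNormedModType C).

Definition cabs2 (z : C) : R := complex.Re z ^+ 2 + complex.Im z ^+ 2.

(* ||x||^2 as a real number (the norm of H is C-valued but real) *)
Definition nrm2 (x : H) : R := complex.Re (`|x| ^+ 2).

(* ip is an inner product on H (linear in the first argument,
   conjugate symmetric) inducing the norm of H; since H is complete,
   (H, ip) is a complex Hilbert space. *)
Definition is_inner_product (ip : H -> H -> C) : Prop :=
  [/\ forall (a : C) (x y z : H), ip (a *: x + y) z = a * ip x z + ip y z,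
      forall x y : H, ip y x = (ip x y)^*
    & forall x : H, ip x x = `|x| ^+ 2].

Definition separable_space : Prop :=
  exists D : set H, countable D /\ closure D = setT.

(* L is a bounded (= continuous) C-linear operator on H, i.e. L \in B(H) *)
Definition bounded_op (L : H -> H) : Prop :=
  (forall (a : C) (x y : H), L (a *: x + y) = a *: L x + L y) /\ continuous L.

Definition closed_range (L : H -> H) : Prop := closed (range L).

Definition is_adjoint (ip : H -> H -> C) (L Ls : H -> H) : Prop :=
  forall x y : H, ip (L x) y = ip x (Ls y).

Definition is_pseudo_inverse (ip : H -> H -> C) (K Kd : H -> H) : Prop :=
  [/\ bounded_op Kd,
      forall x, K (Kd (K x)) = K x,
      forall x, Kd (K (Kd x)) = Kd x,
      is_adjoint ip (K \o Kd) (K \o Kd)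
    & is_adjoint ip (Kd \o K) (Kd \o K)].

Definition null_space (K : H -> H) : set H := [set x | K x = 0].
Definition orth (ip : H -> H -> C) (A : set H) : set H :=
  [set f | forall g, A g -> ip f g = 0].

Variables (d : measure_display) (Omega : measurableType d).

Definition weakly_measurable (ip : H -> H -> C) (F : Omega -> H) : Prop :=
  forall f : H,
    measurable_fun setT (fun w => complex.Re (ip f (F w))) /\
    measurable_fun setT (fun w => complex.Im (ip f (F w))).

Definition parseval_cLframe (ip : H -> H -> C)
    (mu : {measure set Omega -> \bar R}) (L : H -> H) (F : Omega -> H) : Prop :=
  weakly_measurable ip F /\
  exists Ls : H -> H, is_adjoint ip L Ls /\
    forall f : H,
      (\int[mu]_(w in setT) (cabs2 (ip f (F w)))%:E = (nrm2 (Ls f))%:E)%E.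

Definition parseval_cframe_sub (ip : H -> H -> C)
    (mu : {measure set Omega -> \bar R}) (V : set H) (F : Omega -> H) : Prop :=
  [/\ weakly_measurable ip F, forall w, V (F w)
    & forall f : H, V f ->
      (\int[mu]_(w in setT) (cabs2 (ip f (F w)))%:E = (nrm2 f)%:E)%E].

End Hilbert.

(* Main.v *)
Require Import Defs.
From HB Require Import structures.
From mathcomp Require Import all_boot all_order all_algebra.
From mathcomp Require Import all_classical all_reals all_analysis.
From mathcomp Require Import complex.
From mathcomp Require Import ring lra.
Import Order.TTheory GRing.Theory Num.Theory.
Import numFieldNormedType.Exports.
Local Open Scope classical_set_scope.
Local Open Scope ring_scope.
Lemma zm1 (V : zmodType) (a b c : V) : a - c + (a - b) = a + a - (b + c).
Proof. by rewrite opprD addrACA [- c + _]addrC. Qed.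
Lemma zm2 (V : zmodType) (a b c : V) : a - c - (a - b) = b - c.
Proof. by rewrite opprB addrC addrA subrK. Qed.

Section IP.
Variables (R : realType) (H : completeNormedModType R[i]) (ip : H -> H -> R[i]).
Hypothesis hip : is_inner_product ip.
Local Notation C := R[i].
Implicit Types (x y z : H).
Local Notation CT := (Num.NumField.sort R[i]).

Lemma conjE (z : C) : z^* = complex.conjc z.
Proof. by []. Qed.

Lemma ipDZl a x y z : ip (a *: x + y) z = a * ip x z + ip y z.
Proof. by case: hip. Qed.
Lemma ipC x y : ip y x = (ip x y)^*.
Proof. by case: hip. Qed.
Lemma ipxx x : ip x x = `|x| ^+ 2.
Proof. by case: hip. Qed.

Lemma ip0l z : ip 0 z = 0.
Proof.
have := ipDZl 1 0 0 z; rewrite scaler0 addr0 mul1r.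
by move/(congr1 (fun t => t - ip 0 z)); rewrite subrr addrK => <-.
Qed.
Lemma ipDl x y z : ip (x + y) z = ip x z + ip y z.
Proof. by rewrite -[x in LHS]scale1r ipDZl mul1r. Qed.
Lemma ipZl a x z : ip (a *: x) z = a * ip x z.
Proof. by rewrite -[_ *: _]addr0 ipDZl ip0l addr0. Qed.
Lemma ipNl x z : ip (- x) z = - ip x z.
Proof. by rewrite -scaleN1r ipZl mulN1r. Qed.
Lemma ipBl x y z : ip (x - y) z = ip x z - ip y z.
Proof. by rewrite ipDl ipNl. Qed.
Lemma ip0r z : ip z 0 = 0.
Proof. by rewrite ipC ip0l conjC0. Qed.
Lemma ipDr x y z : ip z (x + y) = ip z x + ip z y.
Proof. by rewrite ipC ipDl rmorphD /= -!ipC. Qed.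
Lemma ipZr a x z : ip z (a *: x) = a^* * ip z x.
Proof. by rewrite ipC ipZl rmorphM /= -ipC. Qed.
Lemma ipNr x z : ip z (- x) = - ip z x.
Proof. by rewrite ipC ipNl rmorphN /= -ipC. Qed.
Lemma ipBr x y z : ip z (x - y) = ip z x - ip z y.
Proof. by rewrite ipDr ipNr. Qed.

Lemma ge0_real (z : C) : 0 <= z -> z = (complex.Re z)%:C%C.
Proof.
move=> /ger0_Im h; case: z h => a b /= ->; by [].
Qed.

Lemma ipxxE x : ip x x = (nrm2 x)%:C%C.
Proof. by rewrite ipxx /nrm2 -ge0_real // exprn_ge0. Qed.

Lemma nrm2_ge0 x : 0 <= nrm2 x.
Proof. by have := exprn_ge0 2 (normr_ge0 x); rewrite lecE => /andP[_]. Qed.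

Lemma ipxx_eq0 x : ip x x = 0 -> x = 0.
Proof. by rewrite ipxx => /eqP; rewrite expf_eq0 /= normr_eq0 => /eqP. Qed.

Lemma nrm2_eq0 x : nrm2 x = 0 -> x = 0.
Proof. by move=> h; apply: ipxx_eq0; rewrite ipxxE h. Qed.

Lemma ip_ext x y : (forall z, ip z x = ip z y) -> x = y.
Proof.
move=> h; apply/eqP; rewrite -subr_eq0; apply/eqP/ipxx_eq0.
by rewrite ipBr h subrr.
Qed.

Lemma ip_extl x y : (forall z, ip x z = ip y z) -> x = y.
Proof. by move=> h; apply: ip_ext => z; rewrite ipC h -ipC. Qed.


Lemma conj_i : ('i%C : C)^* = - 'i%C.
Proof. by apply/eqP; rewrite eq_complex /= oppr0 !eqxx. Qed.

Lemma polar y f : ip y f = 4^-1 * ((`|y + f| * `|y + f|) - (`|y - f| * `|y - f|)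
   + 'i%C * (`|y + 'i%C *: f| * `|y + 'i%C *: f|) - 'i%C * (`|y - 'i%C *: f| * `|y - 'i%C *: f|)).
Proof.
rewrite -!expr2 -!ipxx !(ipDl, ipBl, ipDr, ipBr, ipNl, ipNr, ipZl, ipZr) conj_i.
have ii : ('i%C : C) * 'i%C = -1 by rewrite -expr2 sqr_i.
set u := ip y f; set u' := ip f y.
apply: (@eq_trans _ _ (4^-1 * (4 * u + ('i%C * 'i%C + 1) * (2 * u' - 2 * u)))).
  by rewrite ii addNr mul0r addr0 mulrA mulVf ?mul1r.
congr (_ * _); ring.
Qed.

Lemma ip_cvgl {T} (F : set_system T) {FF : Filter F} (g : T -> H) y f :
  g @ F --> y -> (fun t => (ip (g t) f : CT)) @ F --> (ip y f : CT).
Proof.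
move=> gy.
have e : (fun t => (ip (g t) f : CT)) = (fun t => 4^-1 * ((`|g t + f| * `|g t + f|) - (`|g t - f| * `|g t - f|)
   + 'i%C * (`|g t + 'i%C *: f| * `|g t + 'i%C *: f|) - 'i%C * (`|g t - 'i%C *: f| * `|g t - 'i%C *: f|))).
  by apply/funext => t; rewrite polar.
rewrite e polar.
have hn : forall c : H, `|g t + c| @[t --> F] --> `|y + c|.
  by move=> c; apply: cvg_norm; apply: cvgD => //; apply: cvg_cst.
have hm : forall c : H, `|g t - c| @[t --> F] --> `|y - c|.
  by move=> c; apply: cvg_norm; apply: cvgB => //; apply: cvg_cst.
apply: cvgM; first exact: cvg_cst.
apply: cvgB; first apply: cvgD; first apply: cvgB.
- by apply: cvgM; apply: hn.
- by apply: cvgM; apply: hm.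
- by apply: cvgM; [exact: cvg_cst| apply: cvgM; apply: hn].
- by apply: cvgM; [exact: cvg_cst| apply: cvgM; apply: hm].
Qed.

Lemma ip_contl f : continuous (fun y => (ip y f : CT)).
Proof. by move=> y; apply: ip_cvgl. Qed.


Definition nr x : R := complex.Re `|x|.

Lemma normE x : `|x| = (nr x)%:C%C.
Proof. by rewrite /nr -ge0_real. Qed.

Lemma nr_ge0 x : 0 <= nr x.
Proof. by have := normr_ge0 x; rewrite lecE => /andP[_]. Qed.

Lemma nrm2E x : nrm2 x = nr x ^+ 2.
Proof. by rewrite /nrm2 normE -rmorphXn. Qed.

Lemma nr_triangle x y : nr (x + y) <= nr x + nr y.
Proof. by rewrite -lecR rmorphD /= -!normE ler_normD. Qed.

Lemma nrN x : nr (- x) = nr x.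
Proof. by rewrite /nr normrN. Qed.

Lemma conj_real (s : R) : (s%:C%C : C)^* = s%:C%C.
Proof. by apply/eqP; rewrite eq_complex /= oppr0 !eqxx. Qed.

Lemma parallelogram (a b : H) : nrm2 (a + b) + nrm2 (a - b) = 2 * nrm2 a + 2 * nrm2 b.
Proof.
apply: (@complexI R); rewrite !rmorphD !rmorphM /= !rmorph_nat -!ipxxE.
rewrite !(ipDl, ipBl, ipDr, ipBr, ipNl, ipNr); ring.
Qed.

Lemma nrm2_2 (w : H) : nrm2 (2 *: w) = 4 * nrm2 w.
Proof.
apply: (@complexI R); rewrite !rmorphM /= !rmorph_nat -!ipxxE ipZl ipZr conjC_nat.
by rewrite mulrA -natrM.
Qed.

Lemma small_inv (eta : R) : 0 < eta -> exists M, forall k, (M <= k)%N -> (k.+1%:R)^-1 < eta.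
Proof.
move=> he; exists (Num.truncn eta^-1) => k hk.
rewrite invf_plt ?posrE ?ltr0n //; apply: lt_le_trans (truncnS_gt _) _.
by rewrite ler_nat ltnS.
Qed.


Lemma expand_t (z n : H) (s : R) :
  ip (z - (s%:C%C * ip z n) *: n) (z - (s%:C%C * ip z n) *: n) =
  ip z z - 2 * s%:C%C * (ip z n * (ip z n)^*) + s%:C%C * s%:C%C * (ip z n * (ip z n)^*) * ip n n.
Proof.
have hnz : ip n z = (ip z n)^* by rewrite ipC.
rewrite ipBl !ipBr !ipZl !ipZr hnz rmorphM /= conj_real.
ring.
Qed.

Lemma riesz (phi : H -> C) :
  (forall a x y, phi (a *: x + y) = a * phi x + phi y) ->
  continuous (phi : H -> CT) -> exists v, forall x, phi x = ip x v.
Proof.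
move=> phil phic.
have phi0 : phi 0 = 0.
  have := phil 1 0 0; rewrite scaler0 addr0 mul1r.
  by move/(congr1 (fun t => t - phi 0)); rewrite subrr addrK => <-.
have phiD x y : phi (x + y) = phi x + phi y.
  by have := phil 1 x y; rewrite scale1r mul1r.
have phiZ a x : phi (a *: x) = a * phi x by rewrite -[_ *: _]addr0 phil phi0 addr0.
have phiN x : phi (- x) = - phi x by rewrite -scaleN1r phiZ mulN1r.
have phiB x y : phi (x - y) = phi x - phi y by rewrite phiD phiN.
case: (pselect (forall x, phi x = 0)) => [h0|].
  by exists 0 => x; rewrite h0 ip0r.
move=> /existsNP [x0 phix0].
pose N := [set n | phi n = 0].
pose D := [set nrm2 (x0 - n) | n in N].
have hinf : has_inf D.
  split; first by exists (nrm2 (x0 - 0)), 0.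
  by exists 0 => _ [n _ <-]; apply: nrm2_ge0.
pose del := inf D.
have hdel n : N n -> del <= nrm2 (x0 - n).
  by move=> Nn; apply: ge_inf; [case: hinf | exists n].
pose ik (k : nat) : R := (k.+1%:R)^-1.
have ik_gt0 k : 0 < ik k by rewrite invr_gt0 ltr0n.
have hseq k : exists n, N n /\ nrm2 (x0 - n) < del + ik k.
  have hk := ik_gt0 k.
  have [_ [n Nn <-] hn] := inf_adherent hk hinf.
  by exists n.
have [ns hns] := choice hseq.
have Nns k : N (ns k) by case: (hns k).
have hcau k m : nrm2 (ns k - ns m) <= 2 * ik k + 2 * ik m.
  have := parallelogram (x0 - ns m) (x0 - ns k).
  have -> : x0 - ns m - (x0 - ns k) = ns k - ns m.
    exact: zm2.
  pose mm := (2^-1 : C) *: (ns k + ns m).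
  have -> : x0 - ns m + (x0 - ns k) = 2 *: (x0 - mm).
    rewrite scalerBr /mm scalerA divff ?pnatr_eq0 // scale1r scaler_nat mulr2n.
    exact: zm1.
  have Nmm : N mm by rewrite /N /= /mm phiZ phiD (Nns k) (Nns m) addr0 mulr0.
  have := hdel _ Nmm; rewrite nrm2_2.
  case: (hns k) => _ hk; case: (hns m) => _ hm.
  move=> h1 h2; lra.
have ns_cvg : cvg (ns @ \oo).
  apply/cauchy_cvgP; apply: cauchy_exP => eps eps0.
  set e := complex.Re eps.
  have epsE : eps = e%:C%C by apply: ge0_real; apply: ltW.
  have e0 : 0 < e by move: eps0; rewrite epsE ltcR.
  have e4 : 0 < e ^+ 2 / 4 by rewrite divr_gt0 // exprn_gt0.
  have [M hM] := small_inv _ e4.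
  exists (ns M); exists M => // k /= hk.
  rewrite -ball_normE /ball_ /= normE epsE ltcR.
  have h1 : ik M < e ^+ 2 / 4 := hM _ (leqnn M).
  have h2 : ik k < e ^+ 2 / 4 := hM _ hk.
  have h := hcau M k; rewrite nrm2E in h.
  have h0 := nr_ge0 (ns M - ns k).
  nra.
pose l := lim (ns @ \oo).
have hl : ns @ \oo --> l := ns_cvg.
have cN : closed N.
  have -> : N = (phi : H -> CT) @^-1` [set (0 : CT)] by [].
  apply: preimage_closed; first by move=> x _; exact: phic.
  exact/accessible_closed_set1/hausdorff_accessible/norm_hausdorff.
have Nl : N l.
  by apply: (closed_cvg N cN _ l hl); apply: nearW.
have del0 : 0 <= del.
  apply: lb_le_inf; first by exists (nrm2 (x0 - 0)), 0.
  by move=> _ [n _ <-]; apply: nrm2_ge0.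
have hz : nrm2 (x0 - l) <= del.
  apply/ler_addgt0Pr => e e0.
  pose c := del + 5.
  pose eta := e / (e + c).
  have ec : eta * (e + c) = e.
    by rewrite /eta mulrVK // unitfE gt_eqF //; rewrite /c; lra.
  have eta0 : 0 < eta by rewrite /eta divr_gt0 //; rewrite /c; lra.
  have [M1 hM1] := small_inv _ eta0.
  have eta0' : 0 < (eta%:C%C : C) by rewrite ltcR.
  have [M2 _ hM2] := cvgr_dist_lt _ _ hl _ eta0'.
  pose k := maxn M1 M2.
  have hk1 : ik k < eta := hM1 k (leq_maxl _ _).
  have hk2 : `|l - ns k| < eta%:C%C := hM2 k (leq_maxr _ _).
  rewrite normE ltcR in hk2.
  have tri : nr (x0 - l) <= nr (x0 - ns k) + nr (l - ns k).
    have -> : x0 - l = (x0 - ns k) + - (l - ns k) by rewrite opprB addrA subrK.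
    by rewrite -(nrN (l - ns k)); apply: nr_triangle.
  have hB : nrm2 (x0 - ns k) < del + ik k by case: (hns k).
  rewrite !nrm2E in hB *.
  have A0 := nr_ge0 (x0 - l); have B0 := nr_ge0 (x0 - ns k); have t0 := nr_ge0 (l - ns k).
  set A := nr (x0 - l) in A0 tri *; set B := nr (x0 - ns k) in B0 tri hB *.
  set t := nr (l - ns k) in t0 tri hk2 *.
  have cE : c = del + 5 by [].
  clearbody eta c k.
  have s0 : A <= B + eta by lra.
  have s1 : A ^+ 2 <= (B + eta) ^+ 2 by nra.
  have s3 : eta < 1 by nra.
  have s4 : 2 * B <= B ^+ 2 + 1 by have := sqr_ge0 (B - 1); nra.
  nra.
pose z := x0 - l.
have orth n : N n -> ip z n = 0.
  move=> Nn; set cc := ip z n.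
  pose b := nrm2 n; pose s := (b + 1)^-1.
  have b0 : 0 <= b := nrm2_ge0 n.
  have sb : s * (b + 1) = 1 by rewrite /s mulVf // gt_eqF //; lra.
  have s0 : 0 < s by rewrite /s invr_gt0; lra.
  pose t := (s%:C%C * cc).
  have Nt : N (l + t *: n) by rewrite /N /= phiD phiZ Nl Nn mulr0 addr0.
  have := hdel _ Nt.
  have -> : x0 - (l + t *: n) = z - t *: n by rewrite opprD addrA.
  pose a := (complex.Re `|cc|) ^+ 2.
  have a0 : 0 <= a by apply: sqr_ge0.
  have -> : nrm2 (z - t *: n) = nrm2 z - 2 * s * a + s ^+ 2 * a * b.
    apply: (@complexI R); rewrite !(rmorphB, rmorphD, rmorphM, rmorphXn) /= -!ipxxE.
    rewrite -[(1%:C%C : C)]/(1 : C) -[((Normc.normc cc)%:C%C : C)]/(`|cc|) -expr2 normCK.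
    by rewrite /t /cc expand_t; ring.
  move=> h.
  have hz' : nrm2 z <= del := hz.
  have k1 : 0 <= - 2 * s * a + s ^+ 2 * a * b by lra.
  have k2 : s ^+ 2 * a * b = s * a * (s * b) by ring.
  have k3 : s * b = 1 - s by rewrite -sb; ring.
  rewrite k2 k3 in k1.
  have k4 : s * a * (1 + s) <= 0 by nra.
  have k5 : 0 <= s * a by apply: mulr_ge0 => //; apply: ltW.
  have k6 : s * a = 0 by nra.
  have a00 : a = 0.
    by move/eqP: k6; rewrite mulf_eq0 (gt_eqF s0) /= => /eqP.
  have : `|cc| = 0.
    have hc : `|cc| = (complex.Re `|cc|)%:C%C by apply: ge0_real.
    by rewrite hc; move: a00; rewrite /a => /eqP; rewrite sqrf_eq0 => /eqP ->.
  by move/eqP; rewrite normr_eq0 => /eqP.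
have z0 : z != 0.
  apply/eqP => /subr0_eq hx; apply: phix0; rewrite hx; exact: Nl.
have hQ : ip z z != 0 by apply/eqP => /ipxx_eq0; apply/eqP.
exists ((phi z / ip z z)^* *: z) => x.
rewrite ipZr conjCK.
have w : N (phi x *: z - phi z *: x) by rewrite /N /= phiB !phiZ mulrC subrr.
have h : ip (phi x *: z - phi z *: x) z = 0 by rewrite ipC orth // conjC0.
rewrite ipBl !ipZl in h.
apply: (mulIf hQ); rewrite mulrAC divfK //.
by apply/eqP; rewrite -subr_eq0; apply/eqP.
Qed.


Lemma adjoint_exists (T : H -> H) : bounded_op T -> exists Ts, is_adjoint ip T Ts.
Proof.
move=> [Tl Tc].
have h y : exists v, forall x, ip (T x) y = ip x v.
  apply: riesz.
    by move=> a x x'; rewrite Tl ipDZl.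
  by move=> x; apply: ip_cvgl; exact: Tc.
have [Ts hTs] := choice h.
by exists Ts => x y; rewrite hTs.
Qed.

End IP.
Arguments adjoint_exists {R H ip}.
Arguments ipC {R H ip}.
Arguments ip_ext {R H ip}.
Arguments ip0r {R H ip}.
Arguments ipBl {R H ip}.
Arguments ipxx_eq0 {R H ip}.


Theorem lemma3p5 (R : realType) (H : completeNormedModType R[i])
  (ip : H -> H -> R[i]) (d : measure_display) (Omega : measurableType d)
  (mu : {measure set Omega -> \bar R})
  (K Kd : H -> H) (F : Omega -> H) :
  is_inner_product ip -> separable_space H ->
  bounded_op K -> closed_range K ->
  is_pseudo_inverse ip K Kd ->
  parseval_cLframe ip mu K F ->
  let Ft := fun w => Kd (F w) in
  parseval_cframe_sub ip mu (orth ip (null_space K)) Ft /\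
  parseval_cLframe ip mu (Kd \o K) Ft /\
  parseval_cLframe ip mu K (K \o Ft).
Proof.
move=> hip _ [Kl Kc] _ [Kdb KKdK KdKKd Qsa Psa] [Fm [Ls [LsK Fpars]]] Ft.
have [Kdl _] := Kdb.
have [Kds hKds] := adjoint_exists hip _ Kdb.
have Kd0 : Kd 0 = 0.
  have := Kdl 1 0 0; rewrite scaler0 addr0 scale1r.
  by move/(congr1 (fun t => t - Kd 0)); rewrite subrr addrK => <-.
have K0 : K 0 = 0.
  have := Kl 1 0 0; rewrite scaler0 addr0 scale1r.
  by move/(congr1 (fun t => t - K 0)); rewrite subrr addrK => <-.
have KB x y : K (x - y) = K x - K y.
  by have := Kl (-1) y x; rewrite !scaleN1r => h; rewrite addrC h addrC.
have hKd f g : ip f (Kd g) = ip (Kds f) g.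
  by rewrite (ipC hip) hKds -(ipC hip).
have wm : weakly_measurable ip Ft.
  move=> f; rewrite /Ft.
  have hw w : ip f (Kd (F w)) = ip (Kds f) (F w) by rewrite hKd.
  rewrite (_ : (fun w => complex.Re (ip f (Kd (F w)))) = fun w => complex.Re (ip (Kds f) (F w))); last by apply/funext=> w; rewrite hw.
  rewrite (_ : (fun w => complex.Im (ip f (Kd (F w)))) = fun w => complex.Im (ip (Kds f) (F w))); last by apply/funext=> w; rewrite hw.
  exact: Fm.
have LsKds f : Ls (Kds f) = Kd (K f).
  apply: (ip_ext hip) => x.
  by rewrite -LsK -hKds Psa.
have integ f : (\int[mu]_(w in setT) (cabs2 (ip f (Ft w)))%:E = (nrm2 (Kd (K f)))%:E)%E.
  rewrite /Ft.
  have -> : (fun w => (cabs2 (ip f (Kd (F w))))%:E) = (fun w => (cabs2 (ip (Kds f) (F w)))%:E).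
    by apply/funext => w; rewrite hKd.
  by rewrite Fpars LsKds.
split; [|split].
- split => //.
  + move=> w g /= Kg0.
    rewrite /Ft -KdKKd.
    have := Psa (Kd (F w)) g; rewrite /= => ->.
    by rewrite Kg0 Kd0 (ip0r hip).
  + move=> f forth.
    rewrite integ.
    suff -> : Kd (K f) = f by [].
    pose r := f - Kd (K f).
    have Kr : K r = 0 by rewrite /r KB KKdK subrr.
    have h1 : ip f r = 0 by apply: forth.
    have h2 : ip (Kd (K f)) r = 0.
      by have := Psa f r; rewrite /= => ->; rewrite Kr Kd0 (ip0r hip).
    have : ip r r = 0 by rewrite {1}/r (ipBl hip) h1 h2 subrr.
    move/(ipxx_eq0 hip) => /eqP; rewrite subr_eq0 => /eqP.
    by move=> ->.
- split => //.
  exists (Kd \o K); split; first exact: Psa.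
  exact: integ.
- split.
    move=> f; rewrite /Ft /=.
    have hw w : ip f (K (Kd (F w))) = ip (K (Kd f)) (F w) by rewrite (Qsa f (F w)).
    rewrite (_ : (fun w => complex.Re (ip f (K (Kd (F w))))) = fun w => complex.Re (ip (K (Kd f)) (F w))); last by apply/funext=> w; rewrite hw.
    rewrite (_ : (fun w => complex.Im (ip f (K (Kd (F w))))) = fun w => complex.Im (ip (K (Kd f)) (F w))); last by apply/funext=> w; rewrite hw.
    exact: Fm.
  exists Ls; split => // f.
  rewrite /Ft /=.
  have -> : (fun w => (cabs2 (ip f (K (Kd (F w)))))%:E) = (fun w => (cabs2 (ip (K (Kd f)) (F w)))%:E).
    by apply/funext => w; rewrite (Qsa f (F w)).
  rewrite Fpars.
  suff -> : Ls (K (Kd f)) = Ls f by [].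
  apply: (ip_ext hip) => x.
  rewrite -!LsK.
  have := Qsa (K x) f; rewrite /= => <-.
  by rewrite KKdK.
Qed.
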